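(* Let $K$ be a kernel as below, $\mathbf{n}=(n_1,\dots,n_d)\in\mathbb{N}^d$, and suppose $\rho_{\mathbf{j}}(\mathbf{0})\ne0$ for all $\mathbf{j}\in\Omega_{\mathbf{n}}$. Then $\dim SK(\Lambda_{\mathbf{n}})=N=2^dn_1n_2\cdots n_d$. In particular, if $n_1=\dots=n_d=n$ then $\dim SK(\Lambda_{\mathbf{n}})=(2n)^d$.
   Context: $\mathbb{T}^d=(\mathbb{R}/2\pi\mathbb{Z})^d$. Kernel: $K(\mathbf{x})=\sum_{\mathbf{l}\in\mathbb{Z}^d}a_{\mathbf{l}}e^{i\mathbf{l}\cdot\mathbf{x}}$ with $(a_{\mathbf{l}})$ real, $a_{\mathbf{l}}=a_{-\mathbf{l}}$, $\sum_{\mathbf{l}}|a_{\mathbf{l}}|<\infty$. Notation: $\mathbf{x}\cdot\mathbf{y}=\sum_ix_iy_i$; $\mathbf{x}_{\mathbf{k}}=(\pi k_1/n_1,\dots,\pi k_d/n_d)$ for $\mathbf{k}\in\mathbb{Z}^d$, $\Omega_{\mathbf{n}}=\{\mathbf{j}\in\mathbb{Z}^d:0\le j_l\le 2n_l-1\}$, $\Lambda_{\mathbf{n}}=\{\mathbf{x}_{\mathbf{k}}:\mathbf{k}\in\Omega_{\mathbf{n}}\}$, $N=2^dn_1\cdots n_d$. For $\mathbf{j}\in\mathbb{Z}^d$: $\rho_{\mathbf{j}}(\mathbf{x})=\frac{2}{N}\sum_{\mathbf{k}\in\Omega_{\mathbf{n}}}\cos(\mathbf{j}\cdot\mathbf{x}_{\mathbf{k}})K(\mathbf{x}-\mathbf{x}_{\mathbf{k}})$.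 An sk-spline on $\Lambda_{\mathbf{n}}$ (associated with $K$) is a function $s(\mathbf{x})=c+\sum_{\mathbf{k}\in\Omega_{\mathbf{n}}}c_{\mathbf{k}}K(\mathbf{x}-\mathbf{x}_{\mathbf{k}})$ with $c,c_{\mathbf{k}}\in\mathbb{R}$ and $\sum_{\mathbf{k}\in\Omega_{\mathbf{n}}}c_{\mathbf{k}}=0$; $SK(\Lambda_{\mathbf{n}})$ is the real vector space of these. *)

(* Defs.v *)
From Stdlib Require Import Reals.
From mathcomp Require Import all_boot.

Set Implicit Arguments.
Unset Strict Implicit.
Unset Printing Implicit Defensive.

Local Open Scope R_scope.

Notation "\rsum_ ( i : T ) F" := (\big[Rplus/R0]_(i : T) F)
  (at level 41, F at level 41, i, T at level 50).
Notation "\rsum_ ( i < n ) F" := (\big[Rplus/R0]_(i < n) F)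
  (at level 41, F at level 41, i, n at level 50).

(* Points of R^d (representing T^d = (R/2piZ)^d) : functions 'I_d -> R. *)
Definition vsub (d : nat) (x y : 'I_d -> R) : 'I_d -> R := fun i => x i - y i.
Definition vzero (d : nat) : 'I_d -> R := fun _ => 0.

Definition dotZ (d : nat) (l : 'I_d -> Z) (x : 'I_d -> R) : R :=
  \rsum_(i < d) (IZR (l i) * x i).

Definition boxidx (d M : nat) (t : {ffun 'I_d -> 'I_(2 * M + 1)}) : 'I_d -> Z :=
  fun i => (Z.of_nat (nat_of_ord (t i)) - Z.of_nat M)%Z.

Definition box_sum (d M : nat) (f : ('I_d -> Z) -> R) : R :=
  \rsum_(t : {ffun 'I_d -> 'I_(2 * M + 1)}) f (boxidx t).

(* K(x) = sum_{l in Z^d} a_l e^{i l.x}, a_l real, a_l = a_{-l}, sum |a_l| < oo.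
   Since a is real and even, the imaginary parts cancel and the (absolutely
   convergent) series equals sum_l a_l cos(l.x); the sum of an absolutely
   summable family equals the limit of its cube partial sums. *)
Definition is_kernel (d : nat) (a : ('I_d -> Z) -> R) (K : ('I_d -> R) -> R) : Prop :=
  (forall l, a (fun i => (- l i)%Z) = a l) /\
  (exists B, forall M, box_sum M (fun l => Rabs (a l)) <= B) /\
  (forall x, Un_cv (fun M => box_sum M (fun l => a l * cos (dotZ l x))) (K x)).

Definition Omega (d : nat) (n : 'I_d -> nat) : finType :=
  {dffun forall i : 'I_d, 'I_(2 * n i)}.

Definition xk (d : nat) (n : 'I_d -> nat) (k : Omega n) : 'I_d -> R :=
  fun i => PI * INR (nat_of_ord (k i)) / INR (n i).

Definition dotN (d : nat) (n : 'I_d -> nat) (j : Omega n) (x : 'I_d -> R) : R :=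
  \rsum_(i < d) (INR (nat_of_ord (j i)) * x i).

Definition Ncard (d : nat) (n : 'I_d -> nat) : nat :=
  (2 ^ d * \prod_(i < d) n i)%N.

Definition rho (d : nat) (n : 'I_d -> nat) (K : ('I_d -> R) -> R)
    (j : Omega n) (x : 'I_d -> R) : R :=
  2 / INR (Ncard n) * \rsum_(k : Omega n) (cos (dotN j (xk k)) * K (vsub x (xk k))).

Definition SK (d : nat) (n : 'I_d -> nat) (K : ('I_d -> R) -> R)
    (s : ('I_d -> R) -> R) : Prop :=
  exists (c : R) (ck : Omega n -> R),
    \rsum_(k : Omega n) ck k = 0 /\
    forall x, s x = c + \rsum_(k : Omega n) (ck k * K (vsub x (xk k))).

Definition has_dim (X : Type) (V : (X -> R) -> Prop) (m : nat) : Prop :=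
  exists b : 'I_m -> (X -> R),
    (forall i, V (b i)) /\
    (forall lam : 'I_m -> R,
        (forall x, \rsum_(i < m) (lam i * b i x) = 0) -> forall i, lam i = 0) /\
    (forall f, V f -> exists lam : 'I_m -> R,
        forall x, f x = \rsum_(i < m) (lam i * b i x)).

(* Main.v *)
Require Import Defs.
From HB Require Import structures.
From Stdlib Require Import Reals ZArith Lra Lia Classical FunctionalExtensionality.
From mathcomp Require Import all_boot.
From mathcomp Require Import zify.

Unset Printing Implicit Defensive.

Local Open Scope R_scope.

HB.instance Definition _ := Monoid.isComLaw.Build R R0 Rplus (fun x y z => esym (Rplus_assoc x y z)) Rplus_comm Rplus_0_l.

Lemma rsum_mull (I : finType) (P : pred I) c (F : I -> R) :
  c * \big[Rplus/R0]_(i | P i) F i = \big[Rplus/R0]_(i | P i) (c * F i).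
Proof.
apply: (big_rec2 (fun a b => c * a = b)); first by rewrite Rmult_0_r.
by move=> i y1 y2 _ <-; rewrite Rmult_plus_distr_l.
Qed.

Lemma rsum_opp (I : finType) (F : I -> R) :
  Ropp (\big[Rplus/R0]_i F i) = \big[Rplus/R0]_i (- F i).
Proof.
apply: (big_rec2 (fun a b => - a = b)); first by rewrite Ropp_0.
by move=> i y1 y2 _ <-; rewrite Ropp_plus_distr.
Qed.

Lemma rsum_const_ord m c : \big[Rplus/R0]_(t < m) c = INR m * c.
Proof.
elim: m => [|m IH]; first by rewrite big_ord0 /=; ring.
rewrite big_ord_recr IH S_INR; change (INR m * c + c = (INR m + 1) * c); ring.
Qed.

Lemma rsum_const (I : finType) c : \big[Rplus/R0]_(i : I) c = INR #|I| * c.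
Proof.
rewrite big_const; elim: #|I| => [|m IH]; first by rewrite /=; ring.
by rewrite iterS IH S_INR; ring.
Qed.

Lemma rsum0 (I : finType) (F : I -> R) : (forall i, F i = 0) -> \big[Rplus/R0]_i F i = 0.
Proof. by move=> H; rewrite big1. Qed.

Lemma cosZ x z : cos (x + 2*PI*IZR z) = cos x.
Proof.
case: (Z_le_gt_dec 0 z) => h.
- have ->: IZR z = INR (Z.to_nat z) by rewrite INR_IZR_INZ Z2Nat.id.
  rewrite -(cos_period x (Z.to_nat z)); f_equal; ring.
- have ->: IZR z = - INR (Z.to_nat (-z)).
    by rewrite INR_IZR_INZ Z2Nat.id; [rewrite opp_IZR; ring | lia].
  rewrite -(cos_period (x + 2*PI*(-INR (Z.to_nat (-z)))) (Z.to_nat (-z))); f_equal; ring.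
Qed.

Lemma sinZ x z : sin (x + 2*PI*IZR z) = sin x.
Proof.
case: (Z_le_gt_dec 0 z) => h.
- have ->: IZR z = INR (Z.to_nat z) by rewrite INR_IZR_INZ Z2Nat.id.
  rewrite -(sin_period x (Z.to_nat z)); f_equal; ring.
- have ->: IZR z = - INR (Z.to_nat (-z)).
    by rewrite INR_IZR_INZ Z2Nat.id; [rewrite opp_IZR; ring | lia].
  rewrite -(sin_period (x + 2*PI*(-INR (Z.to_nat (-z)))) (Z.to_nat (-z))); f_equal; ring.
Qed.

Definition per d (y y' : 'I_d -> R) := forall i, exists z, y i = y' i + 2*PI*IZR z.
Arguments per {d}.

Lemma dotZ_per d (l : 'I_d -> Z) y y' : per y y' -> exists z, dotZ l y = dotZ l y' + 2*PI*IZR z.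
Proof.
move=> H; rewrite /dotZ.
apply: (big_rec2 (fun a0 b0 : R => exists z, a0 = b0 + 2*PI*IZR z)).
  by exists 0%Z; rewrite Rmult_0_r Rplus_0_r.
move=> i a b _ [z ->]; case: (H i) => zi ->.
exists (l i * zi + z)%Z; rewrite plus_IZR mult_IZR; ring.
Qed.

Lemma dotZ_neg d (l : 'I_d -> Z) y : dotZ l (fun i => - y i) = - dotZ l y.
Proof.
rewrite /dotZ; apply: (big_rec2 (fun a b => a = - b)); first by rewrite Ropp_0.
by move=> i a b _ ->; ring.
Qed.

Section Kern.
Variables (d : nat) (a : ('I_d -> Z) -> R) (K : ('I_d -> R) -> R).
Hypothesis hK : is_kernel a K.

Lemma K_eq y y' : (forall l, cos (dotZ l y) = cos (dotZ l y')) -> K y = K y'.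
Proof.
case: hK => _ [_ hc] H.
apply: (UL_sequence _ _ _ (hc y)).
have ->: (fun M => box_sum M (fun l => a l * cos (dotZ l y))) =
         (fun M => box_sum M (fun l => a l * cos (dotZ l y'))).
  by apply: functional_extensionality => M; rewrite /box_sum; apply: eq_bigr => t _; rewrite H.
exact: hc.
Qed.

Lemma K_per y y' : per y y' -> K y = K y'.
Proof.
move=> H; apply: K_eq => l; case: (@dotZ_per d l y y' H) => z ->; exact: cosZ.
Qed.

Lemma K_even y : K (fun i => - y i) = K y.
Proof. by apply: K_eq => l; rewrite dotZ_neg cos_neg. Qed.

End Kern.

Lemma INR_addn m k : INR (m + k)%N = INR m + INR k.
Proof. exact: plus_INR. Qed.
Lemma INR_muln m k : INR (m * k)%N = INR m * INR k.
Proof. exact: mult_INR. Qed.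

Section Om.
Variables (d : nat) (n : 'I_d -> nat).
Hypothesis hn : forall i, (0 < n i)%N.

Lemma npos2 i : (0 < 2 * n i)%N.
Proof. by have := hn i; rewrite muln_gt0. Qed.

Lemma nR i : INR (n i) <> 0.
Proof. apply: not_0_INR; have := hn i; lia. Qed.

Definition oadd (p q : Omega n) : Omega n :=
  finfun (fun i => Ordinal (ltn_pmod (p i + q i) (npos2 i))).
Definition oneg (p : Omega n) : Omega n :=
  finfun (fun i => Ordinal (ltn_pmod (2 * n i - p i) (npos2 i))).
Definition ozero : Omega n := finfun (fun i => Ordinal (npos2 i)).

Lemma oaddE p q i : nat_of_ord (oadd p q i) = ((p i + q i) %% (2 * n i))%N.
Proof. by rewrite /oadd ffunE. Qed.
Lemma onegE p i : nat_of_ord (oneg p i) = ((2 * n i - p i) %% (2 * n i))%N.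
Proof. by rewrite /oneg ffunE. Qed.
Lemma ozeroE i : nat_of_ord (ozero i) = 0%N.
Proof. by rewrite /ozero ffunE. Qed.

Lemma oadd_inj k : injective (fun p => oadd p k).
Proof.
move=> p q /= /ffunP H; apply/ffunP => i; apply: val_inj => /=.
have := f_equal val (H i); rewrite /= !oaddE => /eqP; rewrite eqn_modDr.
by rewrite !modn_small // => /eqP.
Qed.

Lemma oneg_inj : injective oneg.
Proof.
move=> p q /ffunP H; apply/ffunP => i; apply: val_inj => /=.
have := f_equal val (H i); rewrite /= !onegE.
have := ltn_ord (p i); have := ltn_ord (q i).
case: (nat_of_ord (p i)) => [|x]; case: (nat_of_ord (q i)) => [|y] //.
- rewrite subn0 modnn => h1 h2; rewrite modn_small; lia.
- rewrite subn0 modnn => h1 h2; rewrite modn_small; lia.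
- move=> h1 h2; rewrite !modn_small; lia.
Qed.

Lemma modR a i (r : Z) : exists z,
  INR (a %% (2 * n i))%N * (PI * IZR r / INR (n i)) =
  INR a * (PI * IZR r / INR (n i)) + 2*PI*IZR z.
Proof.
have E := divn_eq a (2 * n i).
exists (- (Z.of_nat (a %/ (2 * n i)) * r))%Z.
have hx := nR i.
rewrite {2}E INR_addn !INR_muln opp_IZR mult_IZR -INR_IZR_INZ.
change (INR 2) with 2. field. exact: hx.
Qed.


Lemma xkE (k : Omega n) i : xk k i = INR (k i) * (PI * IZR 1 / INR (n i)).
Proof. rewrite /xk /=; field; exact: nR. Qed.

Lemma xk_add p q i : exists z, xk (oadd p q) i = xk p i + xk q i + 2*PI*IZR z.
Proof.
case: (modR (p i + q i) i 1) => z Hz; exists z.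
by rewrite !xkE oaddE Hz INR_addn; ring.
Qed.

Lemma xk_neg p i : exists z, - xk (oneg p) i = xk p i + 2*PI*IZR z.
Proof.
case: (modR (2 * n i - p i) i 1) => z Hz; exists (- 1 - z)%Z.
have hp : (p i <= 2 * n i)%coq_nat by apply/leP; exact: ltnW.
rewrite !xkE onegE Hz minus_INR // INR_muln minus_IZR.
change (INR 2) with 2; have := nR i; move=> hx; field; exact: hx.
Qed.

Lemma dotN_per (j : Omega n) x x' : per x x' -> exists z, dotN j x = dotN j x' + 2*PI*IZR z.
Proof.
move=> H; rewrite /dotN.
apply: (big_rec2 (fun a0 b0 : R => exists z, a0 = b0 + 2*PI*IZR z)).
  by exists 0%Z; rewrite Rmult_0_r Rplus_0_r.
move=> i a b _ [z ->]; case: (H i) => zi ->.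
exists (Z.of_nat (j i) * zi + z)%Z; rewrite plus_IZR mult_IZR -INR_IZR_INZ; ring.
Qed.

Lemma dotN_add (j : Omega n) x y : dotN j (fun i => x i + y i) = dotN j x + dotN j y.
Proof.
rewrite /dotN -big_split; apply: eq_bigr => i _ /=; ring.
Qed.

Lemma dotN_opp (j : Omega n) x : dotN j (fun i => - x i) = - dotN j x.
Proof.
rewrite /dotN rsum_opp; apply: eq_bigr => i _ /=; ring.
Qed.

Lemma dotN_sub (j : Omega n) x y : dotN j x - dotN j y = dotN j (vsub x y).
Proof.
rewrite /Rminus -dotN_opp -dotN_add; by [].
Qed.

Variables (a : ('I_d -> Z) -> R) (K : ('I_d -> R) -> R).
Hypothesis hK : is_kernel a K.

Lemma Kdiff p k : K (vsub (xk (oadd p k)) (xk k)) = K (xk p).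
Proof.
apply: (K_per _ _ _ hK) => i; case: (xk_add p k i) => z Hz; exists z.
rewrite /vsub Hz; ring.
Qed.

Lemma Kneg p : K (xk (oneg p)) = K (xk p).
Proof.
rewrite -(K_even _ _ _ hK (xk (oneg p))); apply: (K_per _ _ _ hK) => i; exact: xk_neg.
Qed.

Definition Lam (j : Omega n) := \big[Rplus/R0]_(p : Omega n) (cos (dotN j (xk p)) * K (xk p)).
Definition Tsin (j : Omega n) := \big[Rplus/R0]_(p : Omega n) (sin (dotN j (xk p)) * K (xk p)).

Lemma T0 j : Tsin j = 0.
Proof.
have E : Tsin j = - Tsin j.
  rewrite {1}/Tsin (reindex_inj oneg_inj) /Tsin rsum_opp; apply: eq_bigr => p _.
  rewrite Kneg.
  have -> : dotN j (xk (oneg p)) = - dotN j (fun i => - xk (oneg p) i).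
    by rewrite dotN_opp Ropp_involutive.
  case: (dotN_per j _ _ (xk_neg p)) => z ->.
  rewrite sin_neg sinZ; ring.
lra.
Qed.

Lemma cos_id (j k : Omega n) : \big[Rplus/R0]_(m : Omega n) (cos (dotN j (xk m)) * K (vsub (xk m) (xk k)))
  = cos (dotN j (xk k)) * Lam j.
Proof.
rewrite (reindex_inj (oadd_inj k)).
transitivity (cos (dotN j (xk k)) * Lam j - sin (dotN j (xk k)) * Tsin j); last by rewrite T0; ring.
rewrite /Lam /Tsin !rsum_mull /Rminus rsum_opp -big_split; apply: eq_bigr => p _.
rewrite Kdiff.
have [z ->] : exists z, dotN j (xk (oadd p k)) = dotN j (xk p) + dotN j (xk k) + 2*PI*IZR z.
  have [z Hz] := dotN_per j (xk (oadd p k)) (fun i => xk p i + xk k i) (xk_add p k).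
  by exists z; rewrite Hz dotN_add.
rewrite cosZ cos_plus /=; ring.
Qed.

Lemma sin_id (j k : Omega n) : \big[Rplus/R0]_(m : Omega n) (sin (dotN j (xk m)) * K (vsub (xk m) (xk k)))
  = sin (dotN j (xk k)) * Lam j.
Proof.
rewrite (reindex_inj (oadd_inj k)).
transitivity (sin (dotN j (xk k)) * Lam j + cos (dotN j (xk k)) * Tsin j); last by rewrite T0; ring.
rewrite /Lam /Tsin !rsum_mull -big_split; apply: eq_bigr => p _.
rewrite Kdiff.
have [z ->] : exists z, dotN j (xk (oadd p k)) = dotN j (xk p) + dotN j (xk k) + 2*PI*IZR z.
  have [z Hz] := dotN_per j (xk (oadd p k)) (fun i => xk p i + xk k i) (xk_add p k).
  by exists z; rewrite Hz dotN_add.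
rewrite sinZ sin_plus /=; ring.
Qed.


Lemma sum_cos_tel phi th T :
  2 * sin (th/2) * \big[Rplus/R0]_(t < T) cos (phi + INR t * th) =
  sin (phi + INR T * th - th/2) - sin (phi - th/2).
Proof.
elim: T => [|T IH]; first by rewrite big_ord0 /=; replace (phi + 0 * th - th/2) with (phi - th/2) by ring; ring.
rewrite big_ord_recr S_INR /= Rmult_plus_distr_l IH.
replace (phi + (INR T + 1) * th - th / 2) with ((phi + INR T * th) + th/2) by field.
replace (phi + INR T * th - th / 2) with ((phi + INR T * th) - th/2) by field.
rewrite sin_plus sin_minus; ring.
Qed.

Lemma sin_half_ne0 (nn : nat) (r : Z) : (0 < nn)%N -> IZR r <> 0 ->
  IZR r < 2 * INR nn -> - (2 * INR nn) < IZR r ->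
  sin (PI * IZR r / INR nn / 2) <> 0.
Proof.
move=> hnn hr h1 h2.
have hc : 0 < INR nn by apply: lt_0_INR; apply/ltP.
have hpi := PI_RGT_0.
set u := IZR r / (2 * INR nn).
have hu : u * (2 * INR nn) = IZR r by rewrite /u; field; lra.
have -> : PI * IZR r / INR nn / 2 = PI * u by rewrite /u; field; lra.
case: (Rlt_or_le 0 (IZR r)) => hs.
- have u0 : 0 < u by nra.
  have u1 : u < 1 by nra.
  apply: Rgt_not_eq; apply: sin_gt_0; nra.
- have hs' : IZR r < 0 by lra.
  have u0 : u < 0 by nra.
  have u1 : -1 < u by nra.
  have : 0 < sin (PI * - u) by apply: sin_gt_0; nra.
  rewrite -Ropp_mult_distr_r sin_neg; lra.
Qed.

Lemma sum_cos0 phi (nn : nat) (r : Z) : (0 < nn)%N -> IZR r <> 0 ->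
  IZR r < 2 * INR nn -> - (2 * INR nn) < IZR r ->
  \big[Rplus/R0]_(t < 2 * nn) cos (phi + INR t * (PI * IZR r / INR nn)) = 0.
Proof.
move=> hnn hr h1 h2.
have hc : 0 < INR nn by apply: lt_0_INR; apply/ltP.
have hs := sin_half_ne0 nn r hnn hr h1 h2.
have := sum_cos_tel phi (PI * IZR r / INR nn) (2 * nn).
rewrite INR_muln.
replace (phi + INR 2 * INR nn * (PI * IZR r / INR nn) - PI * IZR r / INR nn / 2)
  with ((phi - PI * IZR r / INR nn / 2) + 2 * PI * IZR r); last by change (INR 2) with 2; field; lra.
rewrite sinZ Rminus_diag => /Rmult_integral [|//].
move/Rmult_integral => [|]; [lra | done].
Qed.

Definition evec (i0 : 'I_d) (t : nat) : Omega n :=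
  finfun (fun i => Ordinal (ltn_pmod (if i == i0 then t else 0%N) (npos2 i))).

Lemma evecE i0 t i : nat_of_ord (evec i0 t i) = ((if i == i0 then t else 0%N) %% (2 * n i))%N.
Proof. by rewrite /evec ffunE. Qed.

Lemma shift_dot (j : Omega n) i0 t (r : 'I_d -> Z) :
  exists z, dotN (oadd j (evec i0 t)) (fun i => PI * IZR (r i) / INR (n i)) =
    dotN j (fun i => PI * IZR (r i) / INR (n i)) + INR t * (PI * IZR (r i0) / INR (n i0)) + 2*PI*IZR z.
Proof.
set y := fun i => PI * IZR (r i) / INR (n i).
have E : dotN j y + INR t * y i0 =
   \big[Rplus/R0]_(i < d) (INR (j i) * y i + INR (if i == i0 then t else 0%N) * y i).
  rewrite big_split /=; congr (_ + _).
  rewrite (bigD1 i0) //= eqxx big1 /=; first ring.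
  by move=> i /negbTE ->; rewrite /= Rmult_0_l.
rewrite E /dotN.
apply: (big_rec2 (fun a0 b0 : R => exists z, a0 = b0 + 2*PI*IZR z)).
  by exists 0%Z; rewrite Rmult_0_r Rplus_0_r.
move=> i a0 b0 _ [z ->].
rewrite oaddE.
case: (modR (j i + evec i0 t i) i (r i)) => z1 Hz1.
case: (modR (if i == i0 then t else 0%N) i (r i)) => z2 Hz2.
exists (z1 + z2 + z)%Z.
rewrite /y Hz1 INR_addn evecE Rmult_plus_distr_r Hz2 !plus_IZR /=; case: (i == i0) => /=; ring.
Qed.

Lemma G0 (m k : Omega n) : m != k ->
  \big[Rplus/R0]_(j : Omega n) cos (dotN j (vsub (xk m) (xk k))) = 0.
Proof.
move=> hmk.
have [i0 hi0] : exists i0, m i0 != k i0.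
  case: (pickP (fun i => m i != k i)) => [i0 h|H]; first by exists i0.
  exfalso; move/eqP: hmk; apply; apply/ffunP => i; apply: val_inj; apply/eqP.
  by move: (H i) => /= /negbFE.
set r := fun i => (Z.of_nat (m i) - Z.of_nat (k i))%Z.
set y := fun i => PI * IZR (r i) / INR (n i).
have Ey : forall j : Omega n, dotN j (vsub (xk m) (xk k)) = dotN j y.
  move=> j; rewrite /dotN; apply: eq_bigr => i _; congr (_ * _).
  rewrite /vsub /xk /y /r minus_IZR -!INR_IZR_INZ; field; exact: nR.
under eq_bigr => j _ do rewrite Ey.
set S := \big[Rplus/R0]_(j : Omega n) cos (dotN j y).
have HS : forall t, S = \big[Rplus/R0]_(j : Omega n) cos (dotN j y + INR t * y i0).
  move=> t; rewrite /S (reindex_inj (oadd_inj (evec i0 t))); apply: eq_bigr => j _.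
  by case: (shift_dot j i0 t r) => z ->; rewrite cosZ.
have hD : INR (2 * n i0) <> 0 by apply: not_0_INR; have := hn i0; lia.
have : INR (2 * n i0) * S = 0.
  rewrite -rsum_const_ord.
  transitivity (\big[Rplus/R0]_(t < 2 * n i0) \big[Rplus/R0]_(j : Omega n) cos (dotN j y + INR t * y i0)).
    by apply: eq_bigr => t _; exact: HS.
  rewrite exchange_big /=; apply: big1 => j _.
  have hm := ltn_ord (m i0); have hk := ltn_ord (k i0).
  have hmR : INR (m i0) < 2 * INR (n i0).
    rewrite -(INR_muln 2); apply: lt_INR; apply/ltP; exact: hm.
  have hkR : INR (k i0) < 2 * INR (n i0).
    rewrite -(INR_muln 2); apply: lt_INR; apply/ltP; exact: hk.
  have Er : IZR (r i0) = INR (m i0) - INR (k i0) by rewrite /r minus_IZR -!INR_IZR_INZ.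
  have hne : INR (m i0) <> INR (k i0).
    by move/INR_eq => E; move/eqP: hi0; apply; apply: val_inj.
  have h0m := pos_INR (m i0); have h0k := pos_INR (k i0).
  apply: sum_cos0; first exact: hn.
  - rewrite Er; lra.
  - rewrite Er; lra.
  - rewrite Er; lra.
move/Rmult_integral => [//|->]; by [].
Qed.

Lemma Gm (m : Omega n) :
  \big[Rplus/R0]_(j : Omega n) cos (dotN j (vsub (xk m) (xk m))) = INR #|Omega n|.
Proof.
rewrite -[RHS]Rmult_1_r -rsum_const; apply: eq_bigr => j _.
rewrite /dotN big1 ?cos_0 // => i _; rewrite /vsub Rminus_diag Rmult_0_r; by [].
Qed.

Lemma card_pos : (0 < #|Omega n|)%N.
Proof. by apply/card_gt0P; exists ozero. Qed.

Lemma fourier_inv (v : Omega n -> R) :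
  (forall j : Omega n, \big[Rplus/R0]_(k : Omega n) (v k * cos (dotN j (xk k))) = 0) ->
  (forall j : Omega n, \big[Rplus/R0]_(k : Omega n) (v k * sin (dotN j (xk k))) = 0) ->
  forall m, v m = 0.
Proof.
move=> Hc Hs m.
have E : \big[Rplus/R0]_(k : Omega n)
     (v k * \big[Rplus/R0]_(j : Omega n) cos (dotN j (vsub (xk m) (xk k)))) = 0.
  transitivity (\big[Rplus/R0]_(j : Omega n)
     (cos (dotN j (xk m)) * (\big[Rplus/R0]_(k : Omega n) (v k * cos (dotN j (xk k))))
      + sin (dotN j (xk m)) * (\big[Rplus/R0]_(k : Omega n) (v k * sin (dotN j (xk k)))))); last first.
    by apply: big1 => j _; rewrite Hc Hs; ring.
  transitivity (\big[Rplus/R0]_(k : Omega n) \big[Rplus/R0]_(j : Omega n)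
      (v k * cos (dotN j (vsub (xk m) (xk k))))).
    by apply: eq_bigr => k _; rewrite rsum_mull.
  rewrite exchange_big /=; apply: eq_bigr => j _.
  rewrite !rsum_mull -big_split; apply: eq_bigr => k _.
  rewrite -dotN_sub cos_minus /=; ring.
rewrite (bigD1 m) //= Gm big1 /= in E.
  have hc : 0 < INR #|Omega n| by apply: lt_0_INR; apply/ltP; exact: card_pos.
  have E' : v m * INR #|Omega n| = 0 by rewrite -E /=; ring.
  by case/Rmult_integral: E'; lra.
by move=> k hk; rewrite G0 ?Rmult_0_r // eq_sym.
Qed.

Lemma cos0 x : cos (dotN ozero x) = 1.
Proof.
rewrite /dotN big1 ?cos_0 // => i _; rewrite ozeroE /=; ring.
Qed.

Hypothesis hrho : forall j : Omega n, rho K j (@vzero d) <> R0.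

Lemma Lam_ne0 j : Lam j <> 0.
Proof.
move=> hL; apply: (hrho j); rewrite /rho.
rewrite (eq_bigr (fun k => cos (dotN j (xk k)) * K (xk k))).
  by move: hL; rewrite /Lam => ->; ring.
move=> k _; congr (_ * _).
rewrite -(K_even _ _ _ hK (xk k)); apply: (K_per _ _ _ hK) => i.
by exists 0%Z; rewrite /vsub /vzero; ring.
Qed.

Lemma inj_main c (v : Omega n -> R) :
  \big[Rplus/R0]_(k : Omega n) v k = 0 ->
  (forall x, c + \big[Rplus/R0]_(k : Omega n) (v k * K (vsub x (xk k))) = 0) ->
  c = 0 /\ forall k, v k = 0.
Proof.
move=> hs H.
have hc : c = 0.
  have : \big[Rplus/R0]_(m : Omega n) (c + \big[Rplus/R0]_(k : Omega n) (v k * K (vsub (xk m) (xk k)))) = 0.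
    by apply: big1 => m _; exact: H.
  rewrite big_split /= rsum_const.
  have -> : \big[Rplus/R0]_(m : Omega n) \big[Rplus/R0]_(k : Omega n) (v k * K (vsub (xk m) (xk k))) = 0.
    rewrite exchange_big /=.
    transitivity (\big[Rplus/R0]_(k : Omega n) (Lam ozero * v k)); last by rewrite -rsum_mull hs; ring.
    apply: eq_bigr => k _.
    transitivity (v k * \big[Rplus/R0]_(m : Omega n) (cos (dotN ozero (xk m)) * K (vsub (xk m) (xk k)))).
      by rewrite rsum_mull; apply: eq_bigr => m _; rewrite cos0; ring.
    by rewrite cos_id cos0; ring.
  move=> /= E; rewrite Rplus_0_r in E.
  case/Rmult_integral: E => [h|//]; exfalso; move: h.
  apply: not_0_INR; apply/eqP; rewrite -lt0n; exact: card_pos.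
have hv : forall m : Omega n, \big[Rplus/R0]_(k : Omega n) (v k * K (vsub (xk m) (xk k))) = 0.
  by move=> m; have := H (xk m); rewrite hc Rplus_0_l.
split=> //; apply: fourier_inv => j.
- have : Lam j * \big[Rplus/R0]_(k : Omega n) (v k * cos (dotN j (xk k))) = 0.
    transitivity (\big[Rplus/R0]_(m : Omega n) (cos (dotN j (xk m)) *
        \big[Rplus/R0]_(k : Omega n) (v k * K (vsub (xk m) (xk k))))); last first.
      by apply: big1 => m _; rewrite hv; ring.
    transitivity (\big[Rplus/R0]_(m : Omega n) \big[Rplus/R0]_(k : Omega n)
        (cos (dotN j (xk m)) * (v k * K (vsub (xk m) (xk k))))); last first.
      by apply: eq_bigr => m _; rewrite rsum_mull.
    rewrite exchange_big /= rsum_mull; apply: eq_bigr => k _.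
    transitivity (v k * \big[Rplus/R0]_(m : Omega n) (cos (dotN j (xk m)) * K (vsub (xk m) (xk k)))).
      by rewrite cos_id; ring.
    by rewrite rsum_mull; apply: eq_bigr => m _; ring.
  by case/Rmult_integral => // /Lam_ne0.
- have : Lam j * \big[Rplus/R0]_(k : Omega n) (v k * sin (dotN j (xk k))) = 0.
    transitivity (\big[Rplus/R0]_(m : Omega n) (sin (dotN j (xk m)) *
        \big[Rplus/R0]_(k : Omega n) (v k * K (vsub (xk m) (xk k))))); last first.
      by apply: big1 => m _; rewrite hv; ring.
    transitivity (\big[Rplus/R0]_(m : Omega n) \big[Rplus/R0]_(k : Omega n)
        (sin (dotN j (xk m)) * (v k * K (vsub (xk m) (xk k))))); last first.
      by apply: eq_bigr => m _; rewrite rsum_mull.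
    rewrite exchange_big /= rsum_mull; apply: eq_bigr => k _.
    transitivity (v k * \big[Rplus/R0]_(m : Omega n) (sin (dotN j (xk m)) * K (vsub (xk m) (xk k)))).
      by rewrite sin_id; ring.
    by rewrite rsum_mull; apply: eq_bigr => m _; ring.
  by case/Rmult_integral => // /Lam_ne0.
Qed.

Definition bas (k : Omega n) : ('I_d -> R) -> R :=
  fun x => if k == ozero then 1 else K (vsub x (xk k)) - K (vsub x (xk ozero)).

Definition vl (lam : Omega n -> R) (k : Omega n) : R :=
  if k == ozero then - \big[Rplus/R0]_(k' : Omega n | k' != ozero) lam k' else lam k.

Lemma vl_sum lam : \big[Rplus/R0]_(k : Omega n) vl lam k = 0.
Proof.
have E : \big[Rplus/R0]_(k : Omega n | k != ozero) vl lam k = \big[Rplus/R0]_(k : Omega n | k != ozero) lam k.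
  by apply: eq_bigr => k /negbTE hk; rewrite /vl hk.
rewrite (bigD1 ozero) //= E /vl eqxx /=; ring.
Qed.

Lemma expand lam x :
  \big[Rplus/R0]_(k : Omega n) (lam k * bas k x) =
  lam ozero + \big[Rplus/R0]_(k : Omega n) (vl lam k * K (vsub x (xk k))).
Proof.
have E1 : \big[Rplus/R0]_(k : Omega n | k != ozero) (lam k * bas k x) =
  \big[Rplus/R0]_(k : Omega n | k != ozero) (lam k * K (vsub x (xk k))) +
  (- K (vsub x (xk ozero))) * \big[Rplus/R0]_(k : Omega n | k != ozero) lam k.
  rewrite rsum_mull -big_split; apply: eq_bigr => k /negbTE hk; rewrite /bas hk /=; ring.
have E2 : \big[Rplus/R0]_(k : Omega n | k != ozero) (vl lam k * K (vsub x (xk k))) =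
  \big[Rplus/R0]_(k : Omega n | k != ozero) (lam k * K (vsub x (xk k))).
  by apply: eq_bigr => k /negbTE hk; rewrite /vl hk.
rewrite (bigD1 ozero) //= [in RHS](bigD1 ozero) //= E1 E2 /bas /vl !eqxx /=; ring.
Qed.

Lemma SK_comb lam : SK n K (fun x => \big[Rplus/R0]_(k : Omega n) (lam k * bas k x)).
Proof.
exists (lam ozero), (vl lam); split; first exact: vl_sum.
by move=> x; rewrite expand.
Qed.

Lemma bas_SK k : SK n K (bas k).
Proof.
have [c [ck [h1 h2]]] := SK_comb (fun k' => if k' == k then 1 else 0).
exists c, ck; split=> // x; rewrite -h2.
rewrite (bigD1 k) //= eqxx big1 /=; first ring.
by move=> k' /negbTE ->; ring.
Qed.

Lemma bas_ind lam : (forall x, \big[Rplus/R0]_(k : Omega n) (lam k * bas k x) = 0) ->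
  forall k, lam k = 0.
Proof.
move=> H.
have [h1 h2] := inj_main (lam ozero) (vl lam) (vl_sum lam) (fun x => etrans (esym (expand lam x)) (H x)).
move=> k; case: (eqVneq k ozero) => [->|hk] //.
by have := h2 k; rewrite /vl (negbTE hk).
Qed.

Lemma bas_span f : SK n K f -> exists lam : Omega n -> R,
  forall x, f x = \big[Rplus/R0]_(k : Omega n) (lam k * bas k x).
Proof.
case=> c [ck [hs hf]].
exists (fun k => if k == ozero then c else ck k) => x.
rewrite expand hf eqxx; congr (_ + _); apply: eq_bigr => k _; congr (_ * _).
rewrite /vl; case: (eqVneq k ozero) => [->|hk].
  have E : \big[Rplus/R0]_(k' : Omega n | k' != ozero) (if k' == ozero then c else ck k') =
     \big[Rplus/R0]_(k' : Omega n | k' != ozero) ck k'.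
    by apply: eq_bigr => k' /negbTE ->.
  rewrite E; move: hs; rewrite (bigD1 ozero) //= => hs; lra.
by [].
Qed.

End Om.

Lemma sum_enum (T : finType) (F : T -> R) :
  \big[Rplus/R0]_(t : T) F t = \big[Rplus/R0]_(i < #|T|) F (enum_val i).
Proof.
rewrite (reindex (@enum_val T T)) //; apply: onW_bij; exact: enum_val_bij.
Qed.

Lemma has_dim_fin (X : Type) (V : (X -> R) -> Prop) (T : finType) (b : T -> X -> R) :
  (forall t, V (b t)) ->
  (forall lam : T -> R, (forall x, \big[Rplus/R0]_(t : T) (lam t * b t x) = 0) -> forall t, lam t = 0) ->
  (forall f, V f -> exists lam : T -> R, forall x, f x = \big[Rplus/R0]_(t : T) (lam t * b t x)) ->
  has_dim V #|T|.
Proof.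
move=> hV hI hS.
exists (fun i => b (enum_val i)); split; first by move=> i.
split.
- move=> lam H i.
  have := hI (fun t => lam (enum_rank t)) _ (enum_val i); rewrite enum_valK; apply.
  move=> x; rewrite sum_enum -(H x); apply: eq_bigr => j _; by rewrite enum_valK.
- move=> f /hS [lam Hl]; exists (fun i => lam (enum_val i)) => x.
  by rewrite Hl sum_enum.
Qed.

Lemma card_Omega d (n : 'I_d -> nat) : #|Omega n| = Ncard n.
Proof.
rewrite /Omega card_dep_ffun foldrE big_map big_enum /= /Ncard.
rewrite (eq_bigr (fun i => 2 * n i)%N); last by move=> i _; rewrite card_ord.
by rewrite big_split /= prod_nat_const card_ord.
Qed.

Theorem mainTheorem9 (d : nat) (n : 'I_d -> nat)
    (a : ('I_d -> Z) -> R) (K : ('I_d -> R) -> R) :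
  (forall i, (0 < n i)%N) ->
  is_kernel a K ->
  (forall j : Omega n, rho K j (@vzero d) <> R0) ->
  has_dim (SK n K) (Ncard n) /\
  (forall m : nat, (forall i, n i = m) -> has_dim (SK n K) ((2 * m) ^ d)%N).
Proof.
move=> hn hK hrho.
have H : has_dim (SK n K) (Ncard n).
  rewrite -card_Omega.
  apply: (has_dim_fin _ _ _ (bas d n hn K)).
  - exact: bas_SK.
  - exact: (bas_ind d n hn a K hK hrho).
  - exact: bas_span.
split=> // m hm.
have -> : ((2 * m) ^ d)%N = Ncard n.
  rewrite /Ncard expnMn (eq_bigr (fun _ => m)) ?prod_nat_const ?card_ord //.
by [].
Qed.
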